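(* For every $c>0$ there is $C>0$ such that the following holds. Let $h\ge1$, $P\in\mathcal C(h)$, and suppose ${\rm diam}_2(P_i)\le\Delta\cdot{\rm diam}_2(P)$ for every hole $P_i$, where $\Delta\le c/h$. Then for every $s\in P$ there is a path in $P$ from $s$ to a point of $\partial P_0$ of length at most $C\,{\rm diam}_2(P)$.
   Context: $\mathcal C(h)$ is the family of polygonal domains $P=P_0\setminus\bigcup_{i=1}^h\operatorname{int}(P_i)$ with $P_0$ a convex polygon and $P_1,\dots,P_h$ pairwise disjoint convex polygons (holes) in the interior of $P_0$; ${\rm diam}_2(\cdot)$ denotes Euclidean diameter. *)

(* Defs.v *)
From Stdlib Require Import Reals Lra List Sorting.Sorted.
Import ListNotations.
Open Scope R_scope.

Definition pt := (R * R)%type.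

Definition dist2 (p q : pt) : R :=
  sqrt ((fst p - fst q) ^ 2 + (snd p - snd q) ^ 2).

Definition pset := pt -> Prop.

Fixpoint wsum (w : list R) (V : list pt) : pt :=
  match w, V with
  | a :: w', v :: V' =>
      let r := wsum w' V' in (a * fst v + fst r, a * snd v + snd r)
  | _, _ => (0, 0)
  end.

Definition conv_hull (V : list pt) : pset := fun p =>
  exists w : list R, length w = length V /\ Forall (fun a => 0 <= a) w /\
    fold_right Rplus 0 w = 1 /\ p = wsum w V.

Definition interior (S : pset) : pset := fun p =>
  exists e, 0 < e /\ forall q, dist2 p q < e -> S q.

Definition closure (S : pset) : pset := fun p =>
  forall e, 0 < e -> exists q, S q /\ dist2 p q < e.

Definition boundary (S : pset) : pset := fun p =>
  closure S p /\ ~ interior S p.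

Definition convex_polygon (S : pset) : Prop :=
  exists V : list pt, (forall p, S p <-> conv_hull V p) /\
    exists p, interior S p.

(* P = P0 \ U_{i<h} int(P_i), with P0, P_i convex polygons, the P_i pairwise
   disjoint and contained in the interior of P0. Holes indexed by i < h. *)
Definition in_class_C (h : nat) (P0 : pset) (Ph : nat -> pset) : Prop :=
  convex_polygon P0 /\
  (forall i, (i < h)%nat -> convex_polygon (Ph i)) /\
  (forall i j, (i < h)%nat -> (j < h)%nat -> i <> j ->
      forall p, Ph i p -> Ph j p -> False) /\
  (forall i, (i < h)%nat -> forall p, Ph i p -> interior P0 p).

Definition domain (h : nat) (P0 : pset) (Ph : nat -> pset) : pset := fun p =>
  P0 p /\ forall i, (i < h)%nat -> ~ interior (Ph i) p.

Definition is_diam (S : pset) (d : R) : Prop :=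
  is_lub (fun r => exists p q, S p /\ S q /\ r = dist2 p q) d.

Definition path_in (S : pset) (gamma : R -> pt) : Prop :=
  (forall t, 0 <= t <= 1 -> S (gamma t)) /\
  (forall t, 0 <= t <= 1 -> forall e, 0 < e -> exists d, 0 < d /\
     forall u, 0 <= u <= 1 -> Rabs (u - t) < d -> dist2 (gamma u) (gamma t) < e).

Fixpoint poly_len (l : list pt) : R :=
  match l with
  | p :: ((q :: _) as l') => dist2 p q + poly_len l'
  | _ => 0
  end.

Definition length_le (gamma : R -> pt) (L : R) : Prop :=
  forall ts : list R, Sorted Rle ts -> Forall (fun t => 0 <= t <= 1) ts ->
    poly_len (map gamma ts) <= L.

(* Main.v *)
From Pilot Require Import Defs.
From Stdlib Require Import Reals Lra Psatz List Sorting.Sorted.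
Import ListNotations.
From Stdlib Require Import ClassicalEpsilon Classical.
Import Pilot.Defs.
Open Scope R_scope.

Definition sqd (p q : pt) : R := (fst p - fst q) ^ 2 + (snd p - snd q) ^ 2.
Definition comb (l : R) (p q : pt) : pt :=
  ((1 - l) * fst p + l * fst q, (1 - l) * snd p + l * snd q).

Lemma pow2_sq x : x ^ 2 = x * x.
Proof. ring. Qed.
Lemma abs_sq x : Rabs x * Rabs x = x * x.
Proof. unfold Rabs; destruct Rcase_abs; ring. Qed.

Lemma sqd_nonneg p q : 0 <= sqd p q.
Proof. unfold sqd. pose proof (pow2_ge_0 (fst p - fst q)). pose proof (pow2_ge_0 (snd p - snd q)). lra. Qed.

Lemma dist2_nonneg p q : 0 <= dist2 p q.
Proof. apply sqrt_pos. Qed.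

Lemma dist2_sq p q : dist2 p q * dist2 p q = sqd p q.
Proof. apply sqrt_sqrt, sqd_nonneg. Qed.

Lemma dist2_le_sq p q k : 0 <= k -> sqd p q <= k * k -> dist2 p q <= k.
Proof.
  intros Hk H. unfold dist2. rewrite <- (sqrt_lem_1 (k*k) k); try nra.
  apply sqrt_le_1_alt. exact H.
Qed.

Lemma sq_le_dist2 p q k : 0 <= k -> k * k <= sqd p q -> k <= dist2 p q.
Proof.
  intros Hk H. unfold dist2. rewrite <- (sqrt_lem_1 (k*k) k); try nra.
  apply sqrt_le_1_alt. exact H.
Qed.

Lemma dist2_sym p q : dist2 p q = dist2 q p.
Proof. unfold dist2. f_equal. ring. Qed.

Lemma dist2_refl p : dist2 p p = 0.
Proof. unfold dist2. replace ((fst p - fst p) ^ 2 + (snd p - snd p) ^ 2) with 0 by ring.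
  apply sqrt_0. Qed.

Lemma dist2_eq0 p q : dist2 p q = 0 -> p = q.
Proof.
  intro H. apply sqrt_eq_0 in H; [|apply sqd_nonneg].
  destruct p as [a b], q as [c d]; simpl in *.
  pose proof (pow2_ge_0 (a - c)). pose proof (pow2_ge_0 (b - d)).
  assert (E1 : (a - c) ^ 2 = 0) by lra. assert (E2 : (b - d) ^ 2 = 0) by lra.
  simpl in E1, E2. rewrite Rmult_1_r in E1, E2.
  apply Rmult_integral in E1. apply Rmult_integral in E2.
  f_equal; destruct E1, E2; lra.
Qed.

Lemma dist2_le_abs p q : dist2 p q <= Rabs (fst p - fst q) + Rabs (snd p - snd q).
Proof.
  apply dist2_le_sq. apply Rplus_le_le_0_compat; apply Rabs_pos.
  unfold sqd. pose proof (Rabs_pos (fst p - fst q)). pose proof (Rabs_pos (snd p - snd q)).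
  rewrite !pow2_sq, <- (abs_sq (fst p - fst q)), <- (abs_sq (snd p - snd q)). nra.
Qed.

Lemma abs_le_dist2_x p q : Rabs (fst p - fst q) <= dist2 p q.
Proof.
  apply sq_le_dist2. apply Rabs_pos. unfold sqd.
  rewrite !pow2_sq, abs_sq. pose proof (pow2_ge_0 (snd p - snd q)). rewrite pow2_sq in H. lra.
Qed.

Lemma abs_le_dist2_y p q : Rabs (snd p - snd q) <= dist2 p q.
Proof.
  apply sq_le_dist2. apply Rabs_pos. unfold sqd.
  rewrite !pow2_sq, abs_sq. pose proof (pow2_ge_0 (fst p - fst q)). rewrite pow2_sq in H. lra.
Qed.

Lemma dist2_scale p q k a b : fst p - fst q = k * a -> snd p - snd q = k * b ->
  dist2 p q = Rabs k * sqrt (a ^ 2 + b ^ 2).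
Proof.
  intros H1 H2. unfold dist2. rewrite H1, H2. apply sqrt_lem_1.
  nra. apply Rmult_le_pos. apply Rabs_pos. apply sqrt_pos.
  transitivity ((Rabs k * Rabs k) * (sqrt (a ^ 2 + b ^ 2) * sqrt (a ^ 2 + b ^ 2))). ring.
  rewrite abs_sq, sqrt_sqrt by nra. ring.
Qed.

Lemma dist2_comb_same l m p q : dist2 (comb l p q) (comb m p q) = Rabs (l - m) * dist2 p q.
Proof.
  rewrite (dist2_scale _ _ (l - m) (fst q - fst p) (snd q - snd p)) by (unfold comb; simpl; ring).
  rewrite (dist2_sym p q). reflexivity.
Qed.

Lemma dist2_comb_r l v q q' : dist2 (comb l v q) (comb l v q') = Rabs l * dist2 q q'.
Proof.
  rewrite (dist2_scale _ _ l (fst q - fst q') (snd q - snd q')) by (unfold comb; simpl; ring).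
  reflexivity.
Qed.

Lemma dist2_comb_end l p q : dist2 p (comb l p q) = Rabs l * dist2 p q.
Proof.
  rewrite (dist2_scale _ _ l (fst p - fst q) (snd p - snd q)) by (unfold comb; simpl; ring).
  reflexivity.
Qed.

Lemma dist2_triangle p q r : dist2 p r <= dist2 p q + dist2 q r.
Proof.
  pose proof (dist2_sq p q) as A. pose proof (dist2_sq q r) as B.
  pose proof (dist2_nonneg p q). pose proof (dist2_nonneg q r).
  apply dist2_le_sq. lra.
  unfold sqd in *.
  set (u1 := fst p - fst q) in *. set (u2 := snd p - snd q) in *.
  set (w1 := fst q - fst r) in *. set (w2 := snd q - snd r) in *.
  replace (fst p - fst r) with (u1 + w1) by (unfold u1, w1; ring).
  replace (snd p - snd r) with (u2 + w2) by (unfold u2, w2; ring).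
  set (A' := dist2 p q) in *. set (B' := dist2 q r) in *.
  rewrite !pow2_sq in *.
  assert (CS : (u1*w1+u2*w2)*(u1*w1+u2*w2) <= (A'*B')*(A'*B')).
  { replace ((A'*B')*(A'*B')) with ((A'*A')*(B'*B')) by ring. rewrite A, B.
    pose proof (pow2_ge_0 (u1*w2-u2*w1)) as HH. rewrite pow2_sq in HH. nra. }
  assert (u1*w1+u2*w2 <= A'*B').
  { assert (0 <= A'*B') by nra. nra. }
  nra.
Qed.

Lemma comb_0 p q : comb 0 p q = p.
Proof. destruct p; unfold comb; simpl; f_equal; ring. Qed.
Lemma comb_1 p q : comb 1 p q = q.
Proof. destruct q; unfold comb; simpl; f_equal; ring. Qed.
Lemma Rdiv_le_0_compat a b : 0 <= a -> 0 < b -> 0 <= a / b.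
Proof. intros. unfold Rdiv. apply Rmult_le_pos; auto. left; apply Rinv_0_lt_compat; auto. Qed.

Definition Lip (g : R -> pt) (L : R) := forall u t, 0 <= u <= 1 -> 0 <= t <= 1 ->
  dist2 (g u) (g t) <= L * Rabs (u - t).
Definition PathOK (S : pset) (g : R -> pt) (L : R) (a b : pt) :=
  Lip g L /\ (forall t, 0 <= t <= 1 -> S (g t)) /\ g 0 = a /\ g 1 = b.

Lemma PathOK_weaken S g L L' a b : L <= L' -> PathOK S g L a b -> PathOK S g L' a b.
Proof.
  intros HL [H1 H2]. split; auto. intros u t Hu Ht.
  pose proof (Rabs_pos (u - t)). specialize (H1 u t Hu Ht). nra.
Qed.

Lemma PathOK_set S S' g L a b : (forall p, S p -> S' p) -> PathOK S g L a b -> PathOK S' g L a b.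
Proof. intros HS [H1 [H2 H3]]. repeat split; auto; apply H3. Qed.

Lemma seg_path (S : pset) p q : (forall th, 0 <= th <= 1 -> S (comb th p q)) ->
  PathOK S (fun t => comb t p q) (dist2 p q) p q.
Proof.
  intros HS. repeat split; auto.
  - intros u t _ _. rewrite dist2_comb_same. lra.
  - apply comb_0.
  - apply comb_1.
Qed.

Lemma rev_path S g L a b : PathOK S g L a b -> PathOK S (fun t => g (1 - t)) L b a.
Proof.
  intros [H1 [H2 [H3 H4]]]. repeat split.
  - intros u t Hu Ht. replace (u - t) with (-((1-u) - (1-t))) by ring.
    rewrite Rabs_Ropp. apply H1; lra.
  - intros t Ht. apply H2; lra.
  - replace (1 - 0) with 1 by ring. exact H4.
  - replace (1 - 1) with 0 by ring. exact H3.
Qed.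

Definition cat_path (g1 g2 : R -> pt) (al : R) (t : R) : pt :=
  if Rle_dec t al then g1 (t / al) else g2 ((t - al) / (1 - al)).

Lemma Rabs_scale x k : 0 < k -> Rabs (x / k) = Rabs x / k.
Proof. intro Hk. unfold Rdiv. rewrite Rabs_mult, Rabs_inv, (Rabs_right k) by lra. reflexivity. Qed.

Lemma concat_path S g1 g2 L1 L2 a b c : 0 < L1 -> 0 < L2 ->
  PathOK S g1 L1 a b -> PathOK S g2 L2 b c ->
  PathOK S (cat_path g1 g2 (L1 / (L1 + L2))) (L1 + L2) a c.
Proof.
  intros P1 P2 [A1 [A2 [A3 A4]]] [B1 [B2 [B3 B4]]].
  set (al := L1 / (L1 + L2)).
  assert (Hal0 : 0 < al) by (unfold al; apply Rdiv_lt_0_compat; lra).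
  assert (Hal1 : al < 1) by (unfold al; apply Rmult_lt_reg_r with (L1 + L2); [lra|];
     unfold Rdiv; rewrite Rmult_assoc, Rinv_l by lra; lra).
  assert (E1 : L1 / al = L1 + L2) by (unfold al; field; lra).
  assert (E2 : L2 / (1 - al) = L1 + L2) by (unfold al; field; split; lra).
  assert (Mix : forall u t, 0 <= u <= al -> al < t <= 1 ->
     dist2 (g1 (u / al)) (g2 ((t - al) / (1 - al))) <= (L1 + L2) * Rabs (u - t)).
  { intros u t Hu Ht.
    eapply Rle_trans. apply (dist2_triangle _ b).
    rewrite <- A4 at 1. rewrite <- B3 at 1.
    assert (Hu' : 0 <= u / al <= 1).
    { split. apply Rdiv_le_0_compat; lra. apply Rmult_le_reg_r with al; auto.
      unfold Rdiv; rewrite Rmult_assoc, Rinv_l by lra; lra. }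
    assert (Ht' : 0 <= (t - al) / (1 - al) <= 1).
    { split. apply Rdiv_le_0_compat; lra. apply Rmult_le_reg_r with (1 - al); [lra|].
      unfold Rdiv; rewrite Rmult_assoc, Rinv_l by lra; lra. }
    pose proof (A1 (u / al) 1 Hu' ltac:(lra)) as X1.
    pose proof (B1 0 ((t - al) / (1 - al)) ltac:(lra) Ht') as X2.
    replace (u / al - 1) with ((u - al) / al) in X1 by (field; lra).
    replace (0 - (t - al) / (1 - al)) with ((al - t) / (1 - al)) in X2 by (field; lra).
    rewrite Rabs_scale in X1, X2 by lra.
    rewrite (Rabs_left1 (u - al)) in X1 by lra.
    rewrite (Rabs_left1 (al - t)) in X2 by lra.
    rewrite (Rabs_left1 (u - t)) by lra.
    replace (L1 * (- (u - al) / al)) with ((L1 / al) * (al - u)) in X1 by (field; lra).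
    replace (L2 * (- (al - t) / (1 - al))) with ((L2 / (1 - al)) * (t - al)) in X2 by (field; lra).
    rewrite E1 in X1. rewrite E2 in X2. lra. }
  repeat split.
  - intros u t Hu Ht. unfold cat_path.
    destruct (Rle_dec u al) as [Hua|Hua]; destruct (Rle_dec t al) as [Hta|Hta].
    + eapply Rle_trans. apply A1.
      split. apply Rdiv_le_0_compat; lra. apply Rmult_le_reg_r with al; auto.
      unfold Rdiv; rewrite Rmult_assoc, Rinv_l by lra; lra.
      split. apply Rdiv_le_0_compat; lra. apply Rmult_le_reg_r with al; auto.
      unfold Rdiv; rewrite Rmult_assoc, Rinv_l by lra; lra.
      replace (u / al - t / al) with ((u - t) / al) by (field; lra).
      rewrite Rabs_scale by lra. rewrite <- E1. right; field; lra.
    + apply Mix; lra.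
    + rewrite dist2_sym, Rabs_minus_sym. apply Mix; lra.
    + eapply Rle_trans. apply B1.
      split. apply Rdiv_le_0_compat; lra. apply Rmult_le_reg_r with (1 - al); [lra|].
      unfold Rdiv; rewrite Rmult_assoc, Rinv_l by lra; lra.
      split. apply Rdiv_le_0_compat; lra. apply Rmult_le_reg_r with (1 - al); [lra|].
      unfold Rdiv; rewrite Rmult_assoc, Rinv_l by lra; lra.
      replace ((u - al) / (1 - al) - (t - al) / (1 - al)) with ((u - t) / (1 - al)) by (field; lra).
      rewrite Rabs_scale by lra. rewrite <- E2. right; field; lra.
  - intros t Ht. unfold cat_path. destruct (Rle_dec t al).
    + apply A2. split. apply Rdiv_le_0_compat; lra. apply Rmult_le_reg_r with al; auto.
      unfold Rdiv; rewrite Rmult_assoc, Rinv_l by lra; lra.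
    + apply B2. split. apply Rdiv_le_0_compat; lra. apply Rmult_le_reg_r with (1 - al); [lra|].
      unfold Rdiv; rewrite Rmult_assoc, Rinv_l by lra; lra.
  - unfold cat_path. destruct (Rle_dec 0 al); [|lra]. unfold Rdiv; rewrite Rmult_0_l. exact A3.
  - unfold cat_path. destruct (Rle_dec 1 al); [lra|]. replace ((1 - al) / (1 - al)) with 1 by (field; lra). exact B4.
Qed.

Lemma poly_len_bound g L : 0 <= L -> Lip g L -> forall ts t0,
  Sorted Rle (t0 :: ts) -> Forall (fun t => 0 <= t <= 1) (t0 :: ts) ->
  poly_len (map g (t0 :: ts)) <= L * (1 - t0).
Proof.
  intros HL HG. induction ts as [|t1 ts IH]; intros t0 HS HF.
  - simpl. inversion HF; subst. nra.
  - change (poly_len (map g (t0 :: t1 :: ts))) with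
      (dist2 (g t0) (g t1) + poly_len (map g (t1 :: ts))).
    inversion HS; subst. inversion H2; subst.
    inversion HF; subst. inversion H5; subst.
    specialize (IH t1 H1 H5).
    pose proof (HG t0 t1 H4 H6). rewrite Rabs_left1 in H by lra. nra.
Qed.

Lemma Lip_path_in S g L : 0 <= L -> Lip g L -> (forall t, 0 <= t <= 1 -> S (g t)) ->
  path_in S g /\ length_le g L.
Proof.
  intros HL HG HS. split. split. exact HS.
  - intros t Ht e He. exists (e / (L + 1)). split. apply Rdiv_lt_0_compat; lra.
    intros u Hu Hd. eapply Rle_lt_trans. apply HG; auto.
    apply Rle_lt_trans with ((L + 1) * Rabs (u - t)). pose proof (Rabs_pos (u - t)); nra.
    apply Rmult_lt_reg_l with (/ (L + 1)). apply Rinv_0_lt_compat; lra.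
    rewrite <- Rmult_assoc, Rinv_l by lra. rewrite Rmult_1_l. unfold Rdiv in Hd. lra.
  - intros ts HS' HF. destruct ts as [|t0 ts]. simpl. lra.
    eapply Rle_trans. apply poly_len_bound; eauto.
    inversion HF; subst. nra.
Qed.
Lemma lip_continuity (f : R -> R) K : 0 <= K -> (forall x y, Rabs (f x - f y) <= K * Rabs (x - y)) ->
  forall c, continuity_pt f c.
Proof.
  intros HK Hf c. unfold continuity_pt, continue_in, limit1_in, limit_in.
  intros eps Heps. exists (eps / (K + 1)). split. apply Rdiv_lt_0_compat; lra.
  intros x [_ Hx]. simpl in *. unfold R_dist in *.
  eapply Rle_lt_trans. apply Hf.
  apply Rle_lt_trans with ((K + 1) * Rabs (x - c)). pose proof (Rabs_pos (x - c)); nra.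
  apply Rmult_lt_reg_l with (/ (K + 1)). apply Rinv_0_lt_compat; lra.
  rewrite <- Rmult_assoc, Rinv_l by lra. rewrite Rmult_1_l. unfold Rdiv in Hx. lra.
Qed.

Fixpoint wcomb (th : R) (w1 w2 : list R) : list R :=
  match w1, w2 with
  | a :: w1', b :: w2' => ((1 - th) * a + th * b) :: wcomb th w1' w2'
  | _, _ => []
  end.

Lemma wsum_wcomb th V : forall w1 w2, length w1 = length V -> length w2 = length V ->
  wsum (wcomb th w1 w2) V = comb th (wsum w1 V) (wsum w2 V) /\
  length (wcomb th w1 w2) = length V /\
  fold_right Rplus 0 (wcomb th w1 w2) = (1 - th) * fold_right Rplus 0 w1 + th * fold_right Rplus 0 w2.
Proof.
  induction V as [|v V IH]; intros w1 w2 H1 H2.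
  - destruct w1, w2; simpl in *; try discriminate. unfold comb; simpl. split. f_equal; ring. split; auto. ring.
  - destruct w1 as [|a w1], w2 as [|b w2]; simpl in *; try discriminate.
    injection H1; injection H2; intros. destruct (IH w1 w2) as [E1 [E2 E3]]; auto.
    rewrite E1. split. unfold comb; simpl. f_equal; ring. split. rewrite E2; auto. rewrite E3; ring.
Qed.

Lemma wcomb_nonneg th w1 w2 : 0 <= th <= 1 -> Forall (fun a => 0 <= a) w1 -> Forall (fun a => 0 <= a) w2 ->
  Forall (fun a => 0 <= a) (wcomb th w1 w2).
Proof.
  intros Hth. revert w2. induction w1 as [|a w1 IH]; intros w2 H1 H2; destruct w2 as [|b w2]; simpl; auto.
  inversion H1; inversion H2; subst. constructor. nra. auto.
Qed.

Lemma conv_convex V p q th : 0 <= th <= 1 -> conv_hull V p -> conv_hull V q -> conv_hull V (comb th p q).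
Proof.
  intros Hth [w1 [L1 [N1 [S1 E1]]]] [w2 [L2 [N2 [S2 E2]]]].
  destruct (wsum_wcomb th V w1 w2 L1 L2) as [A [B C]].
  exists (wcomb th w1 w2). split; auto. split. apply wcomb_nonneg; auto.
  split. rewrite C, S1, S2. ring. rewrite A, E1, E2. reflexivity.
Qed.

Lemma sum_nonneg w : Forall (fun a => 0 <= a) w -> 0 <= fold_right Rplus 0 w.
Proof. induction 1; simpl; lra. Qed.

Lemma wsum_zero w V : Forall (fun a => 0 <= a) w -> fold_right Rplus 0 w = 0 -> wsum w V = (0, 0).
Proof.
  revert V. induction w as [|a w IH]; intros V HN HS; destruct V as [|v V]; simpl; auto.
  inversion HN; subst. simpl in HS. pose proof (sum_nonneg _ H2).
  assert (a = 0) by lra. rewrite (IH V); auto; [|lra]. subst. simpl. f_equal; ring.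
Qed.

Lemma wsum_scale k w V : wsum (map (fun a => k * a) w) V = (k * fst (wsum w V), k * snd (wsum w V)).
Proof.
  revert V. induction w as [|a w IH]; intros V; destruct V as [|v V]; simpl; try (f_equal; ring).
  rewrite IH. simpl. f_equal; ring.
Qed.

Lemma sum_scale k w : fold_right Rplus 0 (map (fun a => k * a) w) = k * fold_right Rplus 0 w.
Proof. induction w; simpl. ring. rewrite IHw. ring. Qed.

Lemma conv_nonempty v V : exists q, conv_hull (v :: V) q.
Proof.
  exists (wsum (1 :: repeat 0 (length V)) (v :: V)). eexists. split. 2: split. 3: split. 4: reflexivity.
  simpl. rewrite repeat_length. auto.
  constructor. lra. induction V; simpl; auto. constructor; auto; lra.
  simpl. induction V; simpl. ring. lra.
Qed.

Lemma conv_cons v V p : V <> [] -> (conv_hull (v :: V) p <->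
  exists l q, 0 <= l <= 1 /\ conv_hull V q /\ p = comb l v q).
Proof.
  intros HV. split.
  - intros [w [HL [HN [HS E]]]]. destruct w as [|a w]; simpl in HL; try discriminate.
    injection HL; intro HL'. inversion HN; subst. simpl in HS.
    pose proof (sum_nonneg _ H2).
    destruct (Req_dec a 1) as [Ha|Ha].
    + destruct V as [|v0 V0]; [congruence|]. destruct (conv_nonempty v0 V0) as [q Hq].
      exists 0, q. split. lra. split; auto. simpl. rewrite (wsum_zero w (v0 :: V0)) by (auto; lra).
      subst a. unfold comb; simpl. f_equal; ring.
    + set (l := 1 - a). assert (Hl : 0 < l) by (unfold l; lra).
      exists l, (wsum (map (fun b => / l * b) w) V). split. unfold l; lra. split.
      * exists (map (fun b => / l * b) w). split. rewrite length_map; auto. split.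
        apply Forall_map. eapply Forall_impl; [|exact H2]. intros b Hb. simpl.
        apply Rmult_le_pos; auto. left; apply Rinv_0_lt_compat; auto.
        split; auto. rewrite sum_scale. unfold l. field_simplify_eq; [lra|]. unfold l in Hl; lra.
      * rewrite wsum_scale. simpl. unfold comb; simpl. f_equal; unfold l; field; lra.
  - intros [l [q [Hl [[w [HL [HN [HS E]]]] Ep]]]].
    exists ((1 - l) :: map (fun b => l * b) w). split. simpl. rewrite length_map, HL. auto.
    split. constructor. lra. apply Forall_map. eapply Forall_impl; [|exact HN]. intros b Hb. simpl. nra.
    split. simpl. rewrite sum_scale, HS. ring.
    simpl. rewrite wsum_scale. subst. unfold comb; simpl. f_equal.
Qed.

Lemma conv_single v p : conv_hull [v] p <-> p = v.
Proof.
  split.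
  - intros [w [HL [HN [HS E]]]]. destruct w as [|a [|]]; simpl in HL; try discriminate.
    simpl in HS. assert (a = 1) by lra. subst. destruct v. simpl. f_equal; ring.
  - intros ->. exists [1]. repeat split; simpl; auto. constructor; auto; lra. ring.
    destruct v; simpl; f_equal; ring.
Qed.

Definition LipF (F : pt -> R) (L : R) := forall p q, Rabs (F p - F q) <= L * dist2 p q.

Lemma conv_min V : V <> [] -> forall F L, 0 <= L -> LipF F L ->
  exists p, conv_hull V p /\ forall q, conv_hull V q -> F p <= F q.
Proof.
  induction V as [|v V IH]; intros HV F L HL HF; [congruence|].
  destruct V as [|v' V'].
  - exists v. split. apply conv_single; auto. intros q Hq. apply conv_single in Hq. subst; lra.
  - assert (HV' : v' :: V' <> []) by congruence.
    assert (Ex : forall q, exists mx, (forall c, 0 <= c <= 1 -> F (comb mx v q) <= F (comb c v q)) /\ 0 <= mx <= 1).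
    { intro q. apply (continuity_ab_min (fun l => F (comb l v q)) 0 1). lra.
      intros c _. apply (lip_continuity _ (L * dist2 v q)). pose proof (dist2_nonneg v q); nra.
      intros x y. eapply Rle_trans. apply HF. rewrite dist2_comb_same. right; ring. }
    set (lam := fun q => proj1_sig (constructive_indefinite_description _ (Ex q))).
    assert (Hlam : forall q, (forall c, 0 <= c <= 1 -> F (comb (lam q) v q) <= F (comb c v q)) /\ 0 <= lam q <= 1).
    { intro q. unfold lam. destruct (constructive_indefinite_description _ (Ex q)); simpl. auto. }
    set (f := fun q => F (comb (lam q) v q)).
    assert (Hf : LipF f L).
    { assert (H1 : forall q q', f q' <= f q + L * dist2 q q').
      { intros q q'. unfold f. destruct (Hlam q') as [A1 _]. destruct (Hlam q) as [_ A2].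
        eapply Rle_trans. apply (A1 (lam q) A2).
        pose proof (HF (comb (lam q) v q') (comb (lam q) v q)). rewrite dist2_comb_r in H.
        rewrite (Rabs_right (lam q)) in H by lra. rewrite dist2_sym in H.
        pose proof (dist2_nonneg q q'). pose proof (Rle_abs (F (comb (lam q) v q') - F (comb (lam q) v q))).
        assert (L * (lam q * dist2 q q') <= L * dist2 q q') by (apply Rmult_le_compat_l; nra). lra. }
      intros q q'. apply Rabs_le. pose proof (H1 q q'). pose proof (H1 q' q). rewrite dist2_sym in H0. lra. }
    destruct (IH HV' f L HL Hf) as [q0 [Hq0 Hmin]].
    exists (comb (lam q0) v q0). split.
    + apply conv_cons; auto. exists (lam q0), q0. split. apply Hlam. auto.
    + intros p Hp. apply conv_cons in Hp; auto. destruct Hp as [l [q [Hl [Hq ->]]]].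
      eapply Rle_trans. apply (Hmin q Hq). unfold f. apply Hlam. auto.
Qed.
Definition convex (S : pset) := forall p q th, 0 <= th <= 1 -> S p -> S q -> S (comb th p q).
Definition hasmin (S : pset) := forall F L, 0 <= L -> LipF F L ->
  exists p, S p /\ forall q, S q -> F p <= F q.

Lemma interior_in S p : interior S p -> S p.
Proof. intros [e [He H]]. apply H. rewrite dist2_refl. auto. Qed.

Lemma poly_props S : convex_polygon S -> convex S /\ hasmin S /\ exists c, interior S c.
Proof.
  intros [V [HV [c Hc]]]. split; [|split].
  - intros p q th Hth Hp Hq. apply HV. apply conv_convex; auto; apply HV; auto.
  - intros F L HL HF. assert (V <> []).
    { intro E. subst. apply interior_in in Hc. apply HV in Hc. destruct Hc as [w [Hw [_ [Hs _]]]].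
      destruct w; simpl in *; try discriminate. lra. }
    destruct (conv_min V H F L HL HF) as [p [Hp Hm]]. exists p. split. apply HV; auto.
    intros q Hq. apply Hm. apply HV; auto.
  - exists c; auto.
Qed.

Lemma comb_swap th p x : comb th p x = comb (1 - th) x p.
Proof. unfold comb. f_equal; ring. Qed.

Lemma sqd_mono a b c d : dist2 a b <= dist2 c d -> sqd a b <= sqd c d.
Proof.
  intro H. rewrite <- (dist2_sq a b), <- (dist2_sq c d).
  pose proof (dist2_nonneg a b). nra.
Qed.

Lemma dist_lip x : LipF (fun p => dist2 x p) 1.
Proof.
  intros p q. apply Rabs_le. pose proof (dist2_triangle x p q). pose proof (dist2_triangle x q p).
  rewrite (dist2_sym q p) in H0. lra.
Qed.

Definition inner (x p q : pt) := (fst x - fst p) * (fst q - fst p) + (snd x - snd p) * (snd q - snd p).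

Lemma nearest_var S x p : convex S -> S p -> (forall q, S q -> dist2 x p <= dist2 x q) ->
  forall q, S q -> inner x p q <= 0.
Proof.
  intros HC Hp Hm q Hq. apply Rnot_lt_le. intro Hk. set (k := inner x p q) in *.
  set (s := sqd q p). assert (Hs : 0 <= s) by apply sqd_nonneg.
  set (th := Rmin 1 (k / (s + 1))).
  assert (Hth0 : 0 < th). { unfold th. apply Rmin_glb_lt. lra. apply Rdiv_lt_0_compat; lra. }
  assert (Hth1 : th <= 1) by (unfold th; apply Rmin_l).
  assert (Hth2 : th * s < 2 * k).
  { assert (th <= k / (s + 1)) by (unfold th; apply Rmin_r).
    assert (k / (s + 1) * s < 2 * k).
    { unfold Rdiv. apply Rmult_lt_reg_r with (s + 1). lra.
      replace (k * / (s + 1) * s * (s + 1)) with (k * s) by (field; lra). nra. }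
    nra. }
  pose proof (sqd_mono _ _ _ _ (Hm _ (HC p q th ltac:(lra) Hp Hq))).
  assert (Hid : sqd x (comb th p q) = sqd x p - 2 * th * k + th * th * s).
  { unfold s, k. unfold sqd, inner, comb. simpl. ring. }
  rewrite Hid in H.
  assert (th * (th * s - 2 * k) < 0).
  { replace 0 with (th * 0) by ring. apply Rmult_lt_compat_l; lra. }
  lra.
Qed.

Lemma proj_exists S : convex S -> hasmin S -> exists pi : pt -> pt,
  (forall x, S (pi x)) /\ (forall x y, dist2 (pi x) (pi y) <= dist2 x y) /\
  (forall x, S x -> pi x = x) /\ (forall x, ~ S x -> ~ interior S (pi x)) /\
  (forall x, (forall e, 0 < e -> exists q, S q /\ dist2 x q < e) -> S x).
Proof.
  intros HC HM.
  assert (Ex : forall x, exists p, S p /\ forall q, S q -> dist2 x p <= dist2 x q).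
  { intro x. apply (HM (fun p => dist2 x p) 1). lra. apply dist_lip. }
  set (pi := fun x => proj1_sig (constructive_indefinite_description _ (Ex x))).
  assert (Hpi : forall x, S (pi x) /\ forall q, S q -> dist2 x (pi x) <= dist2 x q).
  { intro x. unfold pi. destruct (constructive_indefinite_description _ (Ex x)); simpl; auto. }
  assert (Fix : forall x, S x -> pi x = x).
  { intros x Hx. destruct (Hpi x) as [_ H]. specialize (H x Hx). rewrite dist2_refl in H.
    pose proof (dist2_nonneg x (pi x)). symmetry. apply dist2_eq0. lra. }
  exists pi. split; [|split; [|split; [|split]]].
  - intro x; apply Hpi.
  - intros x y. destruct (Hpi x) as [Sx Mx]. destruct (Hpi y) as [Sy My].
    pose proof (nearest_var S x (pi x) HC Sx Mx (pi y) Sy) as V1.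
    pose proof (nearest_var S y (pi y) HC Sy My (pi x) Sx) as V2.
    apply dist2_le_sq. apply dist2_nonneg. rewrite dist2_sq.
    set (px := pi x) in *. set (py := pi y) in *.
    set (A := sqd px py). set (C := sqd x y).
    set (B := (fst x - fst y) * (fst px - fst py) + (snd x - snd y) * (snd px - snd py)).
    assert (HAB : A <= B).
    { assert (inner x px py + inner y py px = A - B) by (unfold inner, A, B, sqd; ring). lra. }
    assert (HCS : B * B <= C * A).
    { assert (C * A - B * B = ((fst x - fst y) * (snd px - snd py) - (snd x - snd y) * (fst px - fst py)) ^ 2)
        by (unfold A, B, C, sqd; ring).
      pose proof (pow2_ge_0 ((fst x - fst y) * (snd px - snd py) - (snd x - snd y) * (fst px - fst py))). lra. }
    assert (HA : 0 <= A) by apply sqd_nonneg.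
    assert (HC0 : 0 <= C) by apply sqd_nonneg.
    destruct (Req_dec A 0) as [E|E]. rewrite E. lra.
    assert (A * A <= C * A) by nra.
    apply Rmult_le_reg_r with A. lra. lra.
  - exact Fix.
  - intros x Hx [e [He Hin]]. destruct (Hpi x) as [Sx Mx].
    set (p := pi x) in *. set (d := dist2 x p).
    assert (Hd : 0 < d).
    { destruct (dist2_nonneg x p) as [H|H]; auto. exfalso. apply Hx.
      symmetry in H. apply dist2_eq0 in H. rewrite H. auto. }
    set (th := Rmin (1/2) (e / (2 * (d + 1)))).
    assert (Hth0 : 0 < th). { unfold th. apply Rmin_glb_lt. lra. apply Rdiv_lt_0_compat; lra. }
    assert (Hth1 : th <= 1/2) by (unfold th; apply Rmin_l).
    assert (Hth2 : th * d < e).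
    { assert (th <= e / (2 * (d + 1))) by (unfold th; apply Rmin_r).
      assert (e / (2 * (d + 1)) * d < e).
      { unfold Rdiv. apply Rmult_lt_reg_r with (2 * (d + 1)). lra.
        replace (e * / (2 * (d + 1)) * d * (2 * (d + 1))) with (e * d) by (field; lra). nra. }
      nra. }
    assert (Sq : S (comb th p x)).
    { apply Hin. rewrite dist2_comb_end, Rabs_right by lra. rewrite dist2_sym. unfold d in Hth2. lra. }
    specialize (Mx _ Sq). rewrite comb_swap, dist2_comb_end, Rabs_right in Mx by lra.
    fold d in Mx. nra.
  - intros x Hx. destruct (Hpi x) as [Sx Mx].
    assert (dist2 x (pi x) = 0).
    { apply Rle_antisym; [|apply dist2_nonneg]. apply Rnot_lt_le. intro Hlt.
      destruct (Hx _ Hlt) as [q [Sq Dq]]. specialize (Mx q Sq). lra. }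
    apply dist2_eq0 in H. rewrite H. auto.
Qed.

Lemma interior_comb S a b th : convex S -> 0 <= th <= 1 -> interior S a -> interior S b ->
  interior S (comb th a b).
Proof.
  intros HC Hth [e1 [He1 H1]] [e2 [He2 H2]]. exists (Rmin e1 e2). split.
  apply Rmin_glb_lt; auto.
  intros z Hz. set (c := comb th a b) in *.
  set (a' := (fst a + (fst z - fst c), snd a + (snd z - snd c))).
  set (b' := (fst b + (fst z - fst c), snd b + (snd z - snd c))).
  assert (E : forall u, dist2 u (fst u + (fst z - fst c), snd u + (snd z - snd c)) = dist2 c z).
  { intro u. unfold dist2. simpl. f_equal. ring. }
  replace z with (comb th a' b').
  apply HC; auto. apply H1. unfold a'. rewrite E. pose proof (Rmin_l e1 e2). lra.
  apply H2. unfold b'. rewrite E. pose proof (Rmin_r e1 e2). lra.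
  unfold a', b', c, comb. destruct z. simpl. f_equal; ring.
Qed.
Lemma Rabs_le_inv x y : Rabs x <= y -> - y <= x <= y.
Proof. unfold Rabs. destruct Rcase_abs; lra. Qed.

Definition boxc (c : pt) (B : R) (z : pt) := Rabs (fst z - fst c) <= B /\ Rabs (snd z - snd c) <= B.

Lemma box_dist c B p q : boxc c B p -> boxc c B q -> dist2 p q <= 4 * B.
Proof.
  intros [H1 H2] [H3 H4]. eapply Rle_trans. apply dist2_le_abs.
  replace (fst p - fst q) with ((fst p - fst c) - (fst q - fst c)) by ring.
  replace (snd p - snd q) with ((snd p - snd c) - (snd q - snd c)) by ring.
  assert (T : forall a b, Rabs (a - b) <= Rabs a + Rabs b).
  { intros a b. unfold Rminus. rewrite <- (Rabs_Ropp b). apply Rabs_triang. }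
  pose proof (T (fst p - fst c) (fst q - fst c)). pose proof (T (snd p - snd c) (snd q - snd c)). lra.
Qed.

Lemma box_seg (S : pset) c B p q : 0 < B -> boxc c B p -> boxc c B q ->
  (forall th, 0 <= th <= 1 -> S (comb th p q)) -> PathOK S (fun t => comb t p q) (4 * B) p q.
Proof.
  intros HB Hp Hq HS. apply PathOK_weaken with (dist2 p q). apply box_dist with c; auto.
  apply seg_path; auto.
Qed.

Section Detour.
Variable K : pset.
Variable d : R.
Variable c : pt.
Hypothesis HC : convex K.
Hypothesis Hd : 0 < d.
Hypothesis Hc : interior K c.
Hypothesis Hdiam : forall p q, K p -> K q -> dist2 p q <= d.

Let O := fun z => ~ interior K z.
Let R0 := 2 * d.
Let T : pt := (fst c, snd c + 3 * R0).

Lemma far_out z : R0 <= Rabs (fst z - fst c) \/ R0 <= Rabs (snd z - snd c) -> O z.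
Proof.
  intros H Hi. apply interior_in in Hi. pose proof (Hdiam _ _ Hi (interior_in _ _ Hc)).
  unfold R0 in H. destruct H as [H|H].
  - pose proof (abs_le_dist2_x z c). lra.
  - pose proof (abs_le_dist2_y z c). lra.
Qed.

Lemma abs_eq_cases x y : Rabs x = y -> x = y \/ x = - y.
Proof. unfold Rabs. destruct Rcase_abs; lra. Qed.

Lemma reachT p : boxc c R0 p -> (R0 <= Rabs (fst p - fst c) \/ R0 <= Rabs (snd p - snd c)) ->
  exists g, PathOK O g (3 * (4 * (6 * d))) p T.
Proof.
  intros [Bx By] Hfar.
  assert (HB : 0 < 6 * d) by lra.
  assert (BT : boxc c (6 * d) T). { unfold T, boxc; simpl. split. replace (fst c - fst c) with 0 by ring.
      rewrite Rabs_R0; lra. replace (snd c + 3 * R0 - snd c) with (3 * R0) by ring. rewrite Rabs_right; unfold R0; lra. }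
  assert (Bp : boxc c (6 * d) p) by (split; unfold R0 in *; lra).
  assert (Top : forall th, 0 <= th <= 1 -> forall q, snd q = snd c + 3 * R0 -> O (comb th q T)).
  { intros th Hth q Hq. apply far_out. right. unfold comb, T; simpl. rewrite Hq.
    replace ((1 - th) * (snd c + 3 * R0) + th * (snd c + 3 * R0) - snd c) with (3 * R0) by ring.
    rewrite Rabs_right; unfold R0; lra. }
  destruct (Rle_dec R0 (Rabs (fst p - fst c))) as [HA|HA];
  [|destruct (Rle_dec R0 (snd p - snd c)) as [HA'|HA']].
  1,2: set (q2 := (fst p, snd c + 3 * R0)).
  1,2: assert (B2 : boxc c (6 * d) q2) by (unfold q2, boxc; simpl; split; [unfold R0 in *; lra|];
        replace (snd c + 3 * R0 - snd c) with (3 * R0) by ring; rewrite Rabs_right; unfold R0; lra).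
  1,2: assert (S1 : PathOK O (fun t => comb t p q2) (4 * (6 * d)) p q2).
  1: apply box_seg with c; auto; intros th Hth; apply far_out; left; unfold comb, q2; simpl;
       replace ((1 - th) * fst p + th * fst p - fst c) with (fst p - fst c) by ring; auto.
  2: { apply box_seg with c; auto. intros th Hth. apply far_out. right. unfold comb, q2; simpl.
       rewrite Rabs_right; [|unfold R0 in *; nra].
       apply Rabs_le_inv in By. unfold R0 in *. nra. }
  1,2: assert (S2 : PathOK O (fun t => comb t q2 T) (4 * (6 * d)) q2 T)
        by (apply box_seg with c; auto; intros th Hth; apply Top; auto).
  1,2: assert (S0 : PathOK O (fun t => p) (4 * (6 * d)) p p)
        by (repeat split; [intros u t _ _; rewrite dist2_refl; pose proof (Rabs_pos (u - t)); nra
           | intros; apply far_out; auto]).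
  1,2: eexists; replace (3 * (4 * (6 * d))) with (4 * (6 * d) + (4 * (6 * d) + 4 * (6 * d))) by ring;
       eapply concat_path; [lra|lra|exact S0|eapply concat_path; [lra|lra|exact S1|exact S2]].
  assert (Hy : snd p - snd c = - R0).
  { destruct Hfar as [H|H]; [lra|]. apply Rabs_le_inv in By.
    unfold Rabs in H; destruct Rcase_abs in H; lra. }
  set (q1 := (fst c + 3 * R0, snd p)). set (q2 := (fst c + 3 * R0, snd c + 3 * R0)).
  assert (B1 : boxc c (6 * d) q1).
  { unfold q1, boxc; simpl. split. replace (fst c + 3 * R0 - fst c) with (3 * R0) by ring.
    rewrite Rabs_right; unfold R0; lra. rewrite Hy, Rabs_Ropp, Rabs_right; unfold R0; lra. }
  assert (B2 : boxc c (6 * d) q2).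
  { unfold q2, boxc; simpl. split. replace (fst c + 3 * R0 - fst c) with (3 * R0) by ring.
    rewrite Rabs_right; unfold R0; lra.
    replace (snd c + 3 * R0 - snd c) with (3 * R0) by ring. rewrite Rabs_right; unfold R0; lra. }
  assert (S1 : PathOK O (fun t => comb t p q1) (4 * (6 * d)) p q1).
  { apply box_seg with c; auto. intros th Hth. apply far_out. right. unfold comb, q1; simpl.
    replace ((1 - th) * snd p + th * snd p - snd c) with (snd p - snd c) by ring.
    rewrite Hy, Rabs_Ropp, Rabs_right; unfold R0; lra. }
  assert (S2 : PathOK O (fun t => comb t q1 q2) (4 * (6 * d)) q1 q2).
  { apply box_seg with c; auto. intros th Hth. apply far_out. left. unfold comb, q1, q2; simpl.
    replace ((1 - th) * (fst c + 3 * R0) + th * (fst c + 3 * R0) - fst c) with (3 * R0) by ring.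
    rewrite Rabs_right; unfold R0; lra. }
  assert (S3 : PathOK O (fun t => comb t q2 T) (4 * (6 * d)) q2 T)
    by (apply box_seg with c; auto; intros th Hth; apply Top; auto).
  eexists; replace (3 * (4 * (6 * d))) with (4 * (6 * d) + (4 * (6 * d) + 4 * (6 * d))) by ring.
  eapply concat_path; [lra|lra|exact S1|eapply concat_path; [lra|lra|exact S2|exact S3]].
Qed.

Lemma half a : K a -> O a -> exists g, PathOK O g (4 * (6 * d) + 3 * (4 * (6 * d))) a T.
Proof.
  intros Ka Oa.
  set (m := Rmax (Rabs (fst a - fst c)) (Rabs (snd a - snd c))).
  assert (Hm1 : Rabs (fst a - fst c) <= m) by apply Rmax_l.
  assert (Hm2 : Rabs (snd a - snd c) <= m) by apply Rmax_r.
  assert (Hmd : m <= d).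
  { pose proof (Hdiam _ _ Ka (interior_in _ _ Hc)). pose proof (abs_le_dist2_x a c).
    pose proof (abs_le_dist2_y a c). unfold m. apply Rmax_lub; lra. }
  assert (Hm0 : 0 < m).
  { destruct (Rle_lt_dec m 0) as [H|H]; auto. exfalso. apply Oa.
    pose proof (Rabs_pos (fst a - fst c)). pose proof (Rabs_pos (snd a - snd c)).
    assert (E1 : Rabs (fst a - fst c) = 0) by lra. assert (E2 : Rabs (snd a - snd c) = 0) by lra.
    apply abs_eq_cases in E1, E2. replace a with c. auto.
    destruct a, c; simpl in *; f_equal; lra. }
  set (k := R0 / m). assert (Hk : 2 <= k).
  { unfold k, R0. apply Rmult_le_reg_r with m; auto. unfold Rdiv. rewrite Rmult_assoc, Rinv_l by lra. lra. }
  set (a' := (fst c + k * (fst a - fst c), snd c + k * (snd a - snd c))).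
  assert (Eabs : forall x, Rabs (k * x) = k * Rabs x).
  { intro x. rewrite Rabs_mult, Rabs_right; lra. }
  assert (Hkm : k * m = R0) by (unfold k; field; lra).
  assert (Ba' : boxc c R0 a').
  { unfold boxc, a'; simpl. split.
    replace (fst c + k * (fst a - fst c) - fst c) with (k * (fst a - fst c)) by ring. rewrite Eabs. nra.
    replace (snd c + k * (snd a - snd c) - snd c) with (k * (snd a - snd c)) by ring. rewrite Eabs. nra. }
  assert (Fa' : R0 <= Rabs (fst a' - fst c) \/ R0 <= Rabs (snd a' - snd c)).
  { unfold a'; simpl.
    replace (fst c + k * (fst a - fst c) - fst c) with (k * (fst a - fst c)) by ring.
    replace (snd c + k * (snd a - snd c) - snd c) with (k * (snd a - snd c)) by ring.
    rewrite !Eabs. unfold m in Hkm. destruct (Rle_dec (Rabs (fst a - fst c)) (Rabs (snd a - snd c))) as [H|H].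
    - right. rewrite Rmax_right in Hkm by lra. lra.
    - left. rewrite Rmax_left in Hkm by lra. lra. }
  destruct (reachT a' Ba' Fa') as [g2 G2].
  assert (S1 : PathOK O (fun t => comb t a a') (4 * (6 * d)) a a').
  { apply box_seg with c. lra. split; lra. destruct Ba'; split; unfold R0 in *; lra.
    intros th Hth Hi. apply Oa.
    set (kk := 1 + th * (k - 1)). assert (Hkk : 1 <= kk) by (unfold kk; nra).
    replace a with (comb (/ kk) c (comb th a a')).
    apply interior_comb; auto. split. left; apply Rinv_0_lt_compat; lra.
    rewrite <- Rinv_1. apply Rinv_le_contravar; lra.
    unfold comb, a'. destruct a as [a1 a2]; simpl. unfold kk in *. f_equal; field; lra. }
  eexists. eapply concat_path. lra. lra. exact S1. exact G2.
Qed.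

Hypothesis HM : hasmin K.

Lemma detour a b : K a -> O a -> K b -> O b ->
  exists g, PathOK (fun z => K z /\ O z) g (2 * (4 * (6 * d) + 3 * (4 * (6 * d)))) a b.
Proof.
  intros Ka Oa Kb Ob.
  destruct (half a Ka Oa) as [g1 G1]. destruct (half b Kb Ob) as [g2 G2].
  apply rev_path in G2.
  assert (G : exists s, PathOK O s (2 * (4 * (6 * d) + 3 * (4 * (6 * d)))) a b).
  { eexists. replace (2 * (4 * (6 * d) + 3 * (4 * (6 * d)))) with
      ((4 * (6 * d) + 3 * (4 * (6 * d))) + (4 * (6 * d) + 3 * (4 * (6 * d)))) by ring.
    eapply concat_path; [lra|lra|exact G1|exact G2]. }
  destruct G as [s [L1 [L2 [L3 L4]]]].
  destruct (proj_exists K HC HM) as [pi [P1 [P2 [P3 [P4 _]]]]].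
  exists (fun t => pi (s t)). repeat split.
  - intros u t Hu Ht. eapply Rle_trans. apply P2. apply L1; auto.
  - apply P1.
  - destruct (classic (K (s t))) as [HK|HK].
    + rewrite P3 by auto. apply L2; auto.
    + apply P4; auto.
  - rewrite L3. apply P3; auto.
  - rewrite L4. apply P3; auto.
Qed.

End Detour.
Lemma lub_ex (A : R -> Prop) M : (forall u, A u -> u <= M) -> (exists u, A u) ->
  exists m, (forall u, A u -> u <= m) /\ (forall m', (forall u, A u -> u <= m') -> m <= m').
Proof.
  intros HM Hne. destruct (completeness A) as [m [H1 H2]].
  exists M. intros u Hu; auto. auto.
  exists m. split; auto.
Qed.

Lemma glb_ex (A : R -> Prop) M : (forall u, A u -> M <= u) -> (exists u, A u) ->
  exists m, (forall u, A u -> m <= u) /\ (forall m', (forall u, A u -> m' <= u) -> m' <= m).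
Proof.
  intros HM [u0 Hu0]. destruct (lub_ex (fun x => A (- x)) (- M)) as [m [H1 H2]].
  - intros u Hu. specialize (HM _ Hu). lra.
  - exists (- u0). rewrite Ropp_involutive. auto.
  - exists (- m). split.
    + intros u Hu. assert (A (- - u)) by (rewrite Ropp_involutive; auto). specialize (H1 _ H). lra.
    + intros m' Hm'. assert (m <= - m'). apply H2. intros u Hu. specialize (Hm' _ Hu). lra. lra.
Qed.

Lemma min_sel (l : list nat) (P : nat -> Prop) (Q : nat -> R -> Prop) :
  (forall j, P j -> exists a, Q j a) -> (forall j a a', Q j a -> Q j a' -> a = a') ->
  (exists j, In j l /\ P j) ->
  exists i a, In i l /\ P i /\ Q i a /\ forall j a', In j l -> P j -> Q j a' -> a <= a'.
Proof.
  intros HQ HU. induction l as [|k l IH]; intros [j [Hj Pj]]; [destruct Hj|].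
  destruct (classic (exists j, In j l /\ P j)) as [Hex|Hnex].
  - destruct (IH Hex) as [i [a [Hi [Pi [Qi Hmin]]]]].
    destruct (classic (P k)) as [Pk|Pk].
    + destruct (HQ k Pk) as [b Qb].
      destruct (Rle_dec a b) as [Hab|Hab].
      * exists i, a. split. right; auto. split; auto. split; auto.
        intros j' a' [E|Hj'] Pj' Qj'. subst j'. rewrite (HU k a' b); auto. apply (Hmin j'); auto.
      * exists k, b. split. left; auto. split; auto. split; auto.
        intros j' a' [E|Hj'] Pj' Qj'. subst j'. rewrite (HU k a' b); auto. lra.
        specialize (Hmin j' a' Hj' Pj' Qj'). lra.
    + exists i, a. split. right; auto. split; auto. split; auto.
      intros j' a' [E|Hj'] Pj' Qj'. subst; contradiction. apply (Hmin j'); auto.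
  - destruct Hj as [E|Hj]; [|exfalso; apply Hnex; exists j; auto]. subst k.
    destruct (HQ j Pj) as [b Qb]. exists j, b. split. left; auto. split; auto. split; auto.
    intros j' a' [E|Hj'] Pj' Qj'. subst j'. rewrite (HU j a' b); auto. lra.
    exfalso; apply Hnex; exists j'; auto.
Qed.

Lemma filter_len_lt (i : nat) l : In i l -> (length (filter (fun k => negb (Nat.eqb k i)) l) < length l)%nat.
Proof.
  induction l as [|k l IH]; intros H; [destruct H|]. simpl.
  assert (Hle : forall l', (length (filter (fun k => negb (Nat.eqb k i)) l') <= length l')%nat).
  { induction l'; simpl; auto. destruct (negb _); simpl; lia. }
  destruct H as [E|H].
  - subst. rewrite Nat.eqb_refl. simpl. specialize (Hle l). lia.
  - destruct (negb (Nat.eqb k i)); simpl; specialize (IH H); lia.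
Qed.

Lemma in_filter_neq (i j : nat) l : In j l -> j <> i -> In j (filter (fun k => negb (Nat.eqb k i)) l).
Proof.
  intros H Hne. apply filter_In. split; auto. apply Nat.eqb_neq in Hne. rewrite Hne. auto.
Qed.

Lemma dist2_shift_x p a : dist2 p (fst p + a, snd p) = Rabs a.
Proof.
  rewrite (dist2_scale _ _ a (-1) 0) by (simpl; ring).
  replace ((-1) ^ 2 + 0 ^ 2) with 1 by ring. rewrite sqrt_1. ring.
Qed.

Lemma comb_comb t w th s v : comb th (comb t s v) (comb w s v) = comb (t + th * (w - t)) s v.
Proof. unfold comb. simpl. f_equal; ring. Qed.
Definition Ecst (dl : R) := 2 * (4 * (6 * dl) + 3 * (4 * (6 * dl))) + dl.

Lemma straight h P0 Ph s v t w dl : 0 <= t <= w -> w <= 1 -> 0 < dl ->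
  (forall u, t <= u <= w -> domain h P0 Ph (comb u s v)) ->
  PathOK (domain h P0 Ph) (fun th => comb th (comb t s v) (comb w s v))
    ((w - t) * dist2 s v + dl) (comb t s v) (comb w s v).
Proof.
  intros Ht Hw Hdl HD. apply PathOK_weaken with (dist2 (comb t s v) (comb w s v)).
  rewrite dist2_comb_same. rewrite Rabs_left1 by lra. pose proof (dist2_nonneg s v). nra.
  apply seg_path. intros th Hth. rewrite comb_comb. apply HD. nra.
Qed.

Lemma main_claim (h : nat) (P0 : pset) (Ph : nat -> pset) (s v : pt) (dl : R) :
  convex P0 -> P0 s -> P0 v -> ~ interior P0 v ->
  (forall i, (i < h)%nat -> convex (Ph i) /\ hasmin (Ph i) /\ (exists c, interior (Ph i) c) /\
       (forall p q, Ph i p -> Ph i q -> dist2 p q <= dl)) ->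
  (forall i j, (i < h)%nat -> (j < h)%nat -> i <> j -> forall p, Ph i p -> Ph j p -> False) ->
  (forall i, (i < h)%nat -> forall p, Ph i p -> interior P0 p) ->
  0 < dl ->
  forall n t l, 0 <= t <= 1 -> (forall j, (j < h)%nat -> ~ interior (Ph j) (comb t s v)) ->
  (forall j, (j < h)%nat -> (exists u, t < u <= 1 /\ Ph j (comb u s v)) -> In j l) ->
  (length l <= n)%nat ->
  exists g, PathOK (domain h P0 Ph) g ((1 - t) * dist2 s v + (INR n + 1) * Ecst dl) (comb t s v) v.
Proof.
  intros CP0 Ps Pv Nv Holes Disj Inside Hdl.
  set (l0 := dist2 s v). assert (Hl0 : 0 <= l0) by apply dist2_nonneg.
  assert (HE : dl <= Ecst dl) by (unfold Ecst; lra).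
  assert (Seg01 : forall u, 0 <= u <= 1 -> P0 (comb u s v)).
  { intros u Hu. apply CP0; auto. }
  assert (Final : forall n t, 0 <= t <= 1 -> (forall j, (j < h)%nat -> ~ interior (Ph j) (comb t s v)) ->
     (forall j, (j < h)%nat -> forall u, t < u <= 1 -> ~ Ph j (comb u s v)) ->
     exists g, PathOK (domain h P0 Ph) g ((1 - t) * l0 + (INR n + 1) * Ecst dl) (comb t s v) v).
  { intros n t Ht Good Empty. eexists. apply PathOK_weaken with ((1 - t) * l0 + dl).
    pose proof (pos_INR n). nra.
    rewrite <- (comb_1 s v) at 2. apply straight; try lra.
    intros u Hu. split. apply Seg01; lra. intros j Hj.
    destruct (Req_dec u t) as [E|E]. subst; auto.
    intro Hi. apply interior_in in Hi. apply (Empty j Hj u); auto. lra. }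
  induction n as [|n IH]; intros t l Ht Good Cover Hlen.
  - apply Final; auto. intros j Hj u Hu Hp. destruct l; [|simpl in Hlen; lia].
    apply (Cover j Hj). exists u; auto.
  - destruct (classic (exists j, In j l /\ ((j < h)%nat /\ exists u, t < u <= 1 /\ Ph j (comb u s v))))
      as [Hex|Hnex].
    2: { apply Final; auto. intros j Hj u Hu Hp. apply Hnex. exists j. split.
         apply Cover; eauto. split; eauto. }
    set (A := fun j u => t < u <= 1 /\ Ph j (comb u s v)).
    set (Q := fun j a => (forall u, A j u -> a <= u) /\ (forall a', (forall u, A j u -> a' <= u) -> a' <= a)).
    destruct (min_sel l (fun j => (j < h)%nat /\ exists u, A j u) Q) as [i [a [Hil [[Hih HAi] [Qa Hmin]]]]].
    { intros j [Hj Hu]. destruct (glb_ex (A j) t) as [m Hm]. intros u [Hu' _]. lra. auto. exists m; auto. }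
    { intros j a1 a2 [H1 H2] [H3 H4]. apply Rle_antisym; auto. }
    { exact Hex. }
    destruct Qa as [Qa1 Qa2].
    destruct (lub_ex (A i) 1) as [b [Hb1 Hb2]]. intros u [Hu _]; lra. auto.
    destruct HAi as [u0 Hu0].
    destruct (Holes i Hih) as [HCi [HMi [[ci Hci] Hdi]]].
    destruct (proj_exists _ HCi HMi) as [pii [_ [_ [_ [_ Closed]]]]].
    assert (Hta : t <= a). { apply Qa2. intros u [Hu _]. lra. }
    assert (Hab : a <= b). { pose proof (Qa1 _ Hu0). pose proof (Hb1 _ Hu0). lra. }
    assert (Hb1' : b <= 1). { apply Hb2. intros u [Hu _]. lra. }
    assert (Hbt : t < b). { pose proof (Hb1 _ Hu0). destruct Hu0 as [Hu0' _]. lra. }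
    assert (DS : forall x y, dist2 (comb x s v) (comb y s v) = Rabs (x - y) * l0).
    { intros; apply dist2_comb_same. }
    assert (Pa : Ph i (comb a s v)).
    { apply Closed. intros e He.
      destruct (classic (exists u, A i u /\ u < a + e / (l0 + 1))) as [[u [Au Hu]]|Hn].
      - exists (comb u s v). split. apply Au. rewrite DS. pose proof (Qa1 _ Au).
        rewrite Rabs_left1 by lra.
        assert ((u - a) * (l0 + 1) < e).
        { apply Rmult_lt_reg_r with (/ (l0 + 1)). apply Rinv_0_lt_compat; lra.
          rewrite Rmult_assoc, Rinv_r by lra. unfold Rdiv in Hu. lra. }
        nra.
      - exfalso. assert (a + e / (l0 + 1) <= a).
        { apply Qa2. intros u Au. apply Rnot_lt_le. intro. apply Hn. exists u; auto. }
        assert (0 < e / (l0 + 1)) by (apply Rdiv_lt_0_compat; lra). lra. }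
    assert (Pb : Ph i (comb b s v)).
    { apply Closed. intros e He.
      destruct (classic (exists u, A i u /\ b - e / (l0 + 1) < u)) as [[u [Au Hu]]|Hn].
      - exists (comb u s v). split. apply Au. rewrite DS. pose proof (Hb1 _ Au).
        rewrite Rabs_right by lra.
        assert ((b - u) * (l0 + 1) < e).
        { apply Rmult_lt_reg_r with (/ (l0 + 1)). apply Rinv_0_lt_compat; lra.
          rewrite Rmult_assoc, Rinv_r by lra. unfold Rdiv in Hu. lra. }
        nra.
      - exfalso. assert (b <= b - e / (l0 + 1)).
        { apply Hb2. intros u Au. apply Rnot_lt_le. intro. apply Hn. exists u; auto. }
        assert (0 < e / (l0 + 1)) by (apply Rdiv_lt_0_compat; lra). lra. }
    assert (Hb1s : b < 1).
    { destruct (Req_dec b 1) as [E|E]; [|lra]. exfalso. apply Nv. rewrite E, comb_1 in Pb.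
      apply (Inside i Hih); auto. }
    assert (NIa : ~ interior (Ph i) (comb a s v)).
    { destruct (Req_dec a t) as [E|E]. rewrite E; apply Good; auto.
      intros [e [He Hball]].
      set (w := a - Rmin (a - t) (e / (l0 + 1)) / 2).
      assert (Hmp : 0 < Rmin (a - t) (e / (l0 + 1))).
      { apply Rmin_glb_lt. lra. apply Rdiv_lt_0_compat; lra. }
      assert (Hw1 : t < w < a) by (unfold w; pose proof (Rmin_l (a - t) (e / (l0 + 1))); lra).
      assert (Aw : A i w).
      { split. lra. apply Hball. rewrite DS. rewrite Rabs_right by lra.
        assert (Hm2 : Rmin (a - t) (e / (l0 + 1)) <= e / (l0 + 1)) by apply Rmin_r.
        assert ((a - w) * (l0 + 1) < e).
        { unfold w. replace (a - (a - Rmin (a - t) (e / (l0 + 1)) / 2)) with (Rmin (a - t) (e / (l0 + 1)) / 2) by ring.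
          apply Rle_lt_trans with (e / (l0 + 1) / 2 * (l0 + 1)). apply Rmult_le_compat_r; lra.
          replace (e / (l0 + 1) / 2 * (l0 + 1)) with (e / 2) by (field; lra). lra. }
        nra. }
      pose proof (Qa1 _ Aw). lra. }
    assert (NIb : ~ interior (Ph i) (comb b s v)).
    { intros [e [He Hball]].
      set (w := b + Rmin (1 - b) (e / (l0 + 1)) / 2).
      assert (Hmp : 0 < Rmin (1 - b) (e / (l0 + 1))).
      { apply Rmin_glb_lt. lra. apply Rdiv_lt_0_compat; lra. }
      assert (Hw1 : b < w <= 1) by (unfold w; pose proof (Rmin_l (1 - b) (e / (l0 + 1))); lra).
      assert (Aw : A i w).
      { split. lra. apply Hball. rewrite DS. rewrite Rabs_left1 by lra.
        assert (Hm2 : Rmin (1 - b) (e / (l0 + 1)) <= e / (l0 + 1)) by apply Rmin_r.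
        assert ((w - b) * (l0 + 1) < e).
        { unfold w. replace (b + Rmin (1 - b) (e / (l0 + 1)) / 2 - b) with (Rmin (1 - b) (e / (l0 + 1)) / 2) by ring.
          apply Rle_lt_trans with (e / (l0 + 1) / 2 * (l0 + 1)). apply Rmult_le_compat_r; lra.
          replace (e / (l0 + 1) / 2 * (l0 + 1)) with (e / 2) by (field; lra). lra. }
        nra. }
      pose proof (Hb1 _ Aw). lra. }
    assert (S1 : PathOK (domain h P0 Ph) (fun th => comb th (comb t s v) (comb a s v))
                  ((a - t) * l0 + dl) (comb t s v) (comb a s v)).
    { apply straight; try lra. intros u Hu. split. apply Seg01; lra. intros j Hj.
      destruct (Req_dec u t) as [E|E]. subst; auto.
      destruct (Req_dec u a) as [E'|E'].
      - subst u. destruct (Nat.eq_dec j i) as [->|Hji]. auto.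
        intro Hi. apply interior_in in Hi. apply (Disj j i Hj Hih Hji _ Hi Pa).
      - intro Hi. apply interior_in in Hi.
        assert (Aj : A j u) by (split; [lra|auto]).
        destruct (glb_ex (A j) t) as [m [Hm1 Hm2]]. intros u' [Hu' _]; lra. eauto.
        assert (a <= m). apply (Hmin j m). apply Cover; auto. exists u; auto. split; eauto.
        split; auto.
        pose proof (Hm1 _ Aj). lra. }
    destruct (detour (Ph i) dl ci HCi Hdl Hci Hdi HMi (comb a s v) (comb b s v) Pa NIa Pb NIb) as [g2 G2].
    apply (PathOK_set _ (domain h P0 Ph)) in G2.
    2: { intros z [Kz Oz]. split. apply interior_in. apply (Inside i Hih); auto.
         intros j Hj. destruct (Nat.eq_dec j i) as [->|Hji]. auto.
         intro Hi. apply interior_in in Hi. apply (Disj j i Hj Hih Hji _ Hi Kz). }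
    set (l' := filter (fun k => negb (Nat.eqb k i)) l).
    assert (Hlen' : (length l' <= n)%nat).
    { pose proof (filter_len_lt i l Hil). unfold l'. lia. }
    destruct (IH b l') as [g3 G3]; auto. lra.
    { intros j Hj. destruct (Nat.eq_dec j i) as [->|Hji]. auto.
      intro Hi. apply interior_in in Hi. apply (Disj j i Hj Hih Hji _ Hi Pb). }
    { intros j Hj [u [Hu Pu]]. apply in_filter_neq.
      apply Cover; auto. exists u. split; auto. lra.
      intro E. subst j. assert (A i u) by (split; [lra|auto]). pose proof (Hb1 _ H). lra. }
    assert (Hpos1 : 0 < (a - t) * l0 + dl) by nra.
    assert (Hpos2 : 0 < 2 * (4 * (6 * dl) + 3 * (4 * (6 * dl)))) by lra.
    assert (Hpos3 : 0 < (1 - b) * l0 + (INR n + 1) * Ecst dl).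
    { pose proof (pos_INR n). assert (0 < Ecst dl) by (unfold Ecst; lra). nra. }
    eexists. apply PathOK_weaken with (((a - t) * l0 + dl) +
        (2 * (4 * (6 * dl) + 3 * (4 * (6 * dl))) + ((1 - b) * l0 + (INR n + 1) * Ecst dl))).
    { rewrite S_INR. unfold Ecst. nra. }
    eapply concat_path; [exact Hpos1| |exact S1|].
    { apply Rplus_lt_0_compat; auto. }
    eapply concat_path; [exact Hpos2|exact Hpos3|exact G2|exact G3].
Qed.
Theorem lemma3 :
  forall c : R, 0 < c ->
  exists C : R, 0 < C /\
  forall (h : nat) (P0 : pset) (Ph : nat -> pset) (D Delta : R),
    (1 <= h)%nat ->
    in_class_C h P0 Ph ->
    is_diam (domain h P0 Ph) D ->
    Delta <= c / INR h ->
    (forall i, (i < h)%nat -> exists d, is_diam (Ph i) d /\ d <= Delta * D) ->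
    forall s, domain h P0 Ph s ->
    exists gamma : R -> pt,
      path_in (domain h P0 Ph) gamma /\ gamma 0 = s /\
      boundary P0 (gamma 1) /\ length_le gamma (C * D).
Proof.
  intros c Hc. exists (1 + 400 * c). split. lra.
  intros h P0 Ph D Delta Hh [CP0 [CPh [Disj Inside]]] [HDub HDlub] HDel Hdiam s Hs.
  destruct (poly_props P0 CP0) as [Cv0 [Hm0 _]].
  destruct (Hm0 (fun p => - fst p) 1) as [v [Pv Hv]]. lra.
  { intros p q. apply Rabs_le. pose proof (abs_le_dist2_x p q). apply Rabs_le_inv in H. lra. }
  assert (Nv : ~ interior P0 v).
  { intros [e [He Hb]]. assert (P0 (fst v + e / 2, snd v)).
    { apply Hb. rewrite dist2_shift_x, Rabs_right; lra. }
    specialize (Hv _ H). simpl in Hv. lra. }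
  assert (Dv : domain h P0 Ph v).
  { split; auto. intros i Hi Hint. apply Nv. apply (Inside i Hi). apply interior_in; auto. }
  assert (Hsv : dist2 s v <= D). { apply HDub. exists s, v. split; [auto|split; auto]. }
  assert (HD0 : 0 <= D). { pose proof (dist2_nonneg s v). lra. }
  set (dl := Delta * D).
  assert (Hdl : 0 < dl).
  { destruct (Hdiam 0%nat ltac:(lia)) as [d0 [[Hd0 _] Hd0']].
    destruct (poly_props _ (CPh 0%nat ltac:(lia))) as [_ [_ [c0 [e [He Hb]]]]].
    assert (Ph 0%nat (fst c0 + e / 2, snd c0)) by (apply Hb; rewrite dist2_shift_x, Rabs_right; lra).
    assert (Ph 0%nat c0) by (apply Hb; rewrite dist2_refl; lra).
    assert (dist2 c0 (fst c0 + e / 2, snd c0) <= d0) by (apply Hd0; exists c0, (fst c0 + e / 2, snd c0); auto).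
    rewrite dist2_shift_x, Rabs_right in H1 by lra. unfold dl. lra. }
  assert (Holes : forall i, (i < h)%nat -> convex (Ph i) /\ hasmin (Ph i) /\ (exists c, interior (Ph i) c) /\
       (forall p q, Ph i p -> Ph i q -> dist2 p q <= dl)).
  { intros i Hi. destruct (poly_props _ (CPh i Hi)) as [A1 [A2 A3]]. split; auto. split; auto. split; auto.
    intros p q Hp Hq. destruct (Hdiam i Hi) as [d [[Hd _] Hd']].
    assert (dist2 p q <= d) by (apply Hd; exists p, q; auto). unfold dl; lra. }
  destruct (main_claim h P0 Ph s v dl Cv0 (proj1 Hs) Pv Nv Holes Disj Inside Hdl h 0 (seq 0 h)) as [g G].
  lra. rewrite comb_0. apply Hs.
  { intros j Hj _. apply in_seq. lia. }
  { rewrite length_seq. lia. }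
  rewrite comb_0 in G. destruct G as [GL [GS [G0 G1]]].
  set (L := (1 - 0) * dist2 s v + (INR h + 1) * Ecst dl) in *.
  assert (HL0 : 0 <= L).
  { unfold L, Ecst. pose proof (pos_INR h). pose proof (dist2_nonneg s v). nra. }
  assert (HLC : L <= (1 + 400 * c) * D).
  { unfold L, Ecst. assert (Hhr : 1 <= INR h) by (apply (le_INR 1); lia).
    assert (Hk : dl * INR h <= c * D).
    { unfold dl. apply Rmult_le_compat_r with (r := D) in HDel; auto.
      unfold Rdiv in HDel. apply Rmult_le_compat_r with (r := INR h) in HDel; [|lra].
      replace (c * / INR h * D * INR h) with (c * D) in HDel by (field; lra). nra. }
    nra. }
  destruct (Lip_path_in _ g L HL0 GL GS) as [P1 P2].
  exists g. split; auto. split; auto. split.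
  - rewrite G1. split.
    + intros e He. exists v. split; auto. rewrite dist2_refl; auto.
    + exact Nv.
  - intros ts HS HF. eapply Rle_trans. apply P2; auto. auto.
Qed.
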